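(* Let $b>0$, $\zeta>0$, $T>0$. Let $w:[0,T]\to[0,\infty)$ be a measurable, locally integrable function, $\mathcal Y:[0,T+b^{-1}]\to\mathbb R$ a function, and $E(u,t)\in\mathbb R$ for $0\le u\le t\le T$, such that for all $0\le u\le t\le T$, $w(t)\le w(u)-\frac b2\int_u^t w(s)\,ds+E(u,t)+\mathcal Y(t)-\mathcal Y(u)$. Assume further (i) $w(0)\le\zeta/2$; (ii) $\mathcal Y(t+s)-\mathcal Y(t)\le\zeta/8$ for all $t\in[0,T]$, $s\in[0,b^{-1}]$; (iii) $E(u,t)\le\zeta/8$ whenever $0\le t-u\le b^{-1}$. Then $\sup_{t\in[0,T]}w(t)<\zeta$.
   Context: In the paper this is applied with $w(t)=\|\mathbf w(t)\|$ the norm of the weighted amplitude of the stochastic CRN, $\mathcal Y$ a martingale noise term, and $E(u,t)$ an error term of order $\Omega^{-2}\mathcal M_{u,t}$ with $\mathcal M_{u,t}$ the number of reactions in $[u,t]$. *)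

(* Defs.v *)
From Stdlib Require Export Reals Lra.
Open Scope R_scope.

(* Stdlib has no Lebesgue integral.  [IsIntegralOf w T I] says that
   I u t plays the role of  \int_u^t w(s) ds  for 0 <= u <= t <= T:
   it is additive over adjacent intervals and satisfies the elementary
   lower/upper bounds by constants.  The Lebesgue integral of any
   measurable, locally integrable w : [0,T] -> [0,oo) satisfies these
   properties, so the theorem below (quantified over every such I)
   implies the paper's statement. *)
Definition IsIntegralOf (w : R -> R) (T : R) (I : R -> R -> R) : Prop :=
  (forall u s t, 0 <= u <= s -> s <= t <= T -> I u t = I u s + I s t) /\
  (forall u t c, 0 <= u <= t -> t <= T ->
     (forall s, u <= s <= t -> c <= w s) -> c * (t - u) <= I u t) /\
  (forall u t c, 0 <= u <= t -> t <= T ->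
     (forall s, u <= s <= t -> w s <= c) -> I u t <= c * (t - u)).

(* Main.v *)
Require Import Defs.
From Stdlib Require Import Reals Lra.
Open Scope R_scope.

Theorem mainTheorem4 (b zeta T : R) (w : R -> R) (I : R -> R -> R)
    (Y : R -> R) (E : R -> R -> R)
    (hb : 0 < b) (hzeta : 0 < zeta) (hT : 0 < T)
    (hw_nonneg : forall t, 0 <= t <= T -> 0 <= w t)
    (hI : IsIntegralOf w T I)
    (hineq : forall u t, 0 <= u -> u <= t -> t <= T ->
       w t <= w u - b / 2 * I u t + E u t + Y t - Y u)
    (h0 : w 0 <= zeta / 2)
    (hY : forall t s, 0 <= t <= T -> 0 <= s <= / b ->
       Y (t + s) - Y t <= zeta / 8)
    (hE : forall u t, 0 <= u -> u <= t -> t <= T -> t - u <= / b ->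
       E u t <= zeta / 8) :
  exists M, M < zeta /\ forall t, 0 <= t <= T -> w t <= M.
Proof.
  destruct hI as [_ [hlo _]].
  assert (hib : 0 < / b) by (apply Rinv_0_lt_compat; lra).
  assert (loc : forall s t, 0 <= s -> s <= t -> t <= T -> t - s <= / b ->
            w t <= w s - b / 2 * I s t + zeta / 4).
  { intros s t Hs Hst HtT Hd.
    pose proof (hineq s t Hs Hst HtT) as H1.
    pose proof (hE s t Hs Hst HtT Hd) as H2.
    pose proof (hY s (t - s) ltac:(lra) ltac:(lra)) as H3.
    replace (s + (t - s)) with t in H3 by ring. lra. }
  assert (Ipos : forall s t, 0 <= s -> s <= t -> t <= T -> 0 <= I s t).
  { intros s t Hs Hst HtT.
    pose proof (hlo s t 0 ltac:(lra) HtT) as H.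
    assert (0 * (t - s) <= I s t).
    { apply H. intros x Hx. apply hw_nonneg. lra. }
    lra. }
  assert (base : forall t, 0 <= t <= T -> t <= / b -> w t <= 3 * zeta / 4).
  { intros t Ht Htb.
    pose proof (loc 0 t ltac:(lra) ltac:(lra) ltac:(lra) ltac:(lra)).
    pose proof (Ipos 0 t ltac:(lra) ltac:(lra) ltac:(lra)).
    assert (0 <= b / 2 * I 0 t) by (apply Rmult_le_pos; lra).
    lra. }
  assert (ind : forall n : nat, forall t, 0 <= t <= T -> t <= INR n / b ->
            w t <= 3 * zeta / 4).
  { induction n as [|n IH]; intros t Ht Htn.
    - apply base; auto. simpl in Htn. unfold Rdiv in Htn. lra.
    - destruct (Rle_lt_dec t (/ b)) as [Hl|Hl]. { apply base; auto. }
      set (u := t - / b).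
      assert (Hu : w u <= 3 * zeta / 4).
      { apply IH. unfold u; lra.
        rewrite S_INR in Htn. unfold u.
        replace ((INR n + 1) / b) with (INR n / b + / b) in Htn by (field; lra).
        lra. }
      set (c := w t - zeta / 4).
      assert (Hs : forall s, u <= s <= t -> c <= w s).
      { intros s Hs'. unfold c.
        pose proof (loc s t ltac:(unfold u in *; lra) ltac:(lra) ltac:(lra)
                      ltac:(unfold u in *; lra)).
        pose proof (Ipos s t ltac:(unfold u in *; lra) ltac:(lra) ltac:(lra)).
        assert (0 <= b / 2 * I s t) by (apply Rmult_le_pos; lra).
        lra. }
      pose proof (hlo u t c ltac:(unfold u; lra) ltac:(lra) Hs) as Hc.
      replace (t - u) with (/ b) in Hc by (unfold u; ring).
      pose proof (loc u t ltac:(unfold u; lra) ltac:(unfold u; lra) ltac:(lra)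
                    ltac:(unfold u; lra)) as Hl2.
      assert (b / 2 * (c * / b) <= b / 2 * I u t)
        by (apply Rmult_le_compat_l; lra).
      replace (b / 2 * (c * / b)) with (c / 2) in H by (field; lra).
      unfold c in H. lra. }
  exists (3 * zeta / 4). split. lra.
  intros t Ht. destruct (INR_unbounded (t * b)) as [n Hn].
  apply (ind n t Ht).
  apply Rmult_le_reg_r with b; [lra|].
  replace (INR n / b * b) with (INR n) by (field; lra). lra.
Qed.
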